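(* Let $b_x,b_y,u_x,u_y,K,\beta,e$ be positive constants with $u_y>u_x$ and $b_x\geq b_y+e$, let $h>0$, and set \[ \phi_1(h)=\frac{b_y\left\{1-\exp\left(-\frac{\beta K u_y}{b_y}h\right)\right\}}{\beta K u_y},\qquad \phi_2(h)=h . \] Consider the discrete system \[ X_{n+1}=\frac{X_n(1+\phi_1(h)b_x)+\phi_1(h)eY_n}{1+\phi_1(h)\left(\frac{b_x}{K}X_n+\frac{b_x}{K}Y_n+u_x+\beta Y_n+\frac{e}{K}Y_n+\frac{e}{K}\frac{Y_n^2}{X_n}\right)},\qquad Y_{n+1}=\frac{Y_n\{1+\phi_2(h)(b_y+\beta X_n)\}}{1+\phi_2(h)\left(\frac{b_y}{K}X_n+\frac{b_y}{K}Y_n+u_y\right)} . \] Let $E_0=(0,0)$, $E_1=(\bar X,0)$ with $\bar X=K(1-u_x/b_x)$, and $E^*=(X^*,Y^* )$ with \[ X^*=\frac{-B+\sqrt{B^2-4AC}}{2A},\qquad Y^*=\frac{(\beta K-b_y)X^*}{b_y}+\frac{K(b_y-u_y)}{b_y}, \] where \[ A=\frac{\beta K}{b_y^2}\{b_y(b_x-b_y-e)+\beta K(b_y+e)\}, \] \[ B=-K(b_x-u_x)+K(b_x+\beta K+e)\frac{b_y-u_y}{b_y}+2eK\frac{(\beta K-b_y)(b_y-u_y)}{b_y^2}-\frac{eK(\beta K-b_y)}{b_y}, \] \[ C=-\frac{eK^2(b_y-u_y)u_y}{b_y^2}. \] Define $V_0=\frac{b_y}{b_x}\frac{u_x}{u_y}$,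 $H_0=\frac{\beta}{u_y}K\left(1-\frac{u_x}{b_x}\right)$ and $R_0=V_0+H_0$. Then, for every $h>0$: (i) the system is locally asymptotically stable around $E_0$ if $b_x<u_x$ and $b_y<u_y$; (ii) if $b_x>u_x$, the system is locally asymptotically stable around $E_1$ when $R_0<1$, and $E_1$ is unstable when $R_0>1$; (iii) the system is locally asymptotically stable around $E^*$ if $b_x>u_x$, $b_y>u_y$, $b_y>\beta K$ and $\frac{K}{X^*}>\frac{b_y-\beta K}{b_y-u_y}$.
   Context: This is a nonstandard finite-difference discretization (with step size $h$) of a host–parasite model with horizontal and imperfect vertical transmission. The paper assumes throughout that $u_y>u_x$ and $b_x\geq b_y+e$. A fixed point of the map is called (locally asymptotically) stable if both eigenvalues of the Jacobian of the map at the fixed point have modulus strictly less than $1$. *)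

(* Defs.v *)
From Stdlib Require Import Reals.
From Coquelicot Require Import Coquelicot.
Open Scope R_scope.

Definition phi1 (bY uY K beta h : R) : R :=
  bY * (1 - exp (- (beta * K * uY / bY) * h)) / (beta * K * uY).
Definition phi2 (h : R) : R := h.

(* The discrete map (X_n, Y_n) |-> (F1 X_n Y_n, F2 X_n Y_n).
   Division is Rocq's total division (x / 0 = 0). *)
Definition F1 (bX bY uX uY K beta e h : R) (X Y : R) : R :=
  let p := phi1 bY uY K beta h in
  (X * (1 + p * bX) + p * e * Y) /
  (1 + p * (bX / K * X + bX / K * Y + uX + beta * Y + e / K * Y
            + e / K * (Y ^ 2 / X))).

Definition F2 (bX bY uX uY K beta e h : R) (X Y : R) : R :=
  let q := phi2 h in
  Y * (1 + q * (bY + beta * X)) /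
  (1 + q * (bY / K * X + bY / K * Y + uY)).

Definition J11 bX bY uX uY K beta e h X0 Y0 :=
  Derive (fun x => F1 bX bY uX uY K beta e h x Y0) X0.
Definition J12 bX bY uX uY K beta e h X0 Y0 :=
  Derive (fun y => F1 bX bY uX uY K beta e h X0 y) Y0.
Definition J21 bX bY uX uY K beta e h X0 Y0 :=
  Derive (fun x => F2 bX bY uX uY K beta e h x Y0) X0.
Definition J22 bX bY uX uY K beta e h X0 Y0 :=
  Derive (fun y => F2 bX bY uX uY K beta e h X0 y) Y0.

Definition is_eigenvalue2 (a b c d : R) (z : C) : Prop :=
  ((RtoC a - z) * (RtoC d - z) - RtoC b * RtoC c)%C = RtoC 0.

Definition jac_eigenvalue bX bY uX uY K beta e h X0 Y0 (z : C) : Prop :=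
  is_eigenvalue2 (J11 bX bY uX uY K beta e h X0 Y0) (J12 bX bY uX uY K beta e h X0 Y0)
                 (J21 bX bY uX uY K beta e h X0 Y0) (J22 bX bY uX uY K beta e h X0 Y0) z.

Definition LAS bX bY uX uY K beta e h X0 Y0 : Prop :=
  forall z : C, jac_eigenvalue bX bY uX uY K beta e h X0 Y0 z -> Cmod z < 1.

Definition unstable bX bY uX uY K beta e h X0 Y0 : Prop :=
  exists z : C, jac_eigenvalue bX bY uX uY K beta e h X0 Y0 z /\ Cmod z > 1.

Definition Xbar (bX uX K : R) : R := K * (1 - uX / bX).

Definition coefA (bX bY e K beta : R) : R :=
  beta * K / bY ^ 2 * (bY * (bX - bY - e) + beta * K * (bY + e)).
Definition coefB (bX bY uX uY e K beta : R) : R :=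
  - K * (bX - uX) + K * (bX + beta * K + e) * ((bY - uY) / bY)
  + 2 * e * K * ((beta * K - bY) * (bY - uY) / bY ^ 2)
  - e * K * (beta * K - bY) / bY.
Definition coefC (bY uY e K : R) : R :=
  - (e * K ^ 2 * (bY - uY) * uY / bY ^ 2).

Definition Xstar (bX bY uX uY e K beta : R) : R :=
  let A := coefA bX bY e K beta in
  let B := coefB bX bY uX uY e K beta in
  let C0 := coefC bY uY e K in
  (- B + sqrt (B ^ 2 - 4 * A * C0)) / (2 * A).
Definition Ystar (bX bY uX uY e K beta : R) : R :=
  (beta * K - bY) * Xstar bX bY uX uY e K beta / bY + K * (bY - uY) / bY.

Definition V0 (bX bY uX uY : R) : R := bY / bX * (uX / uY).
Definition H0 (bX uX uY K beta : R) : R := beta / uY * K * (1 - uX / bX).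
Definition Rnum0 (bX bY uX uY K beta : R) : R := V0 bX bY uX uY + H0 bX uX uY K beta.

(* Main.v *)
Require Import Defs.
From Stdlib Require Import Reals Lra Psatz.
From Coquelicot Require Import Coquelicot.
Open Scope R_scope.

Lemma eig_parts a b c d x y : is_eigenvalue2 a b c d (x, y) ->
  (a - x) * (d - x) - y*y - b*c = 0 /\ y * (2*x - a - d) = 0.
Proof.
  unfold is_eigenvalue2; intros H.
  pose proof (f_equal fst H) as H1; pose proof (f_equal snd H) as H2.
  simpl in H1, H2. split; lra.
Qed.

Lemma jury a b c d z : 1 - (a+d) + (a*d - b*c) > 0 -> 1 + (a+d) + (a*d-b*c) > 0 ->
  a*d - b*c < 1 -> is_eigenvalue2 a b c d z -> Cmod z < 1.
Proof.
  intros H1 H2 H3 Hz. destruct z as [x y].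
  destruct (eig_parts _ _ _ _ _ _ Hz) as [E1 E2].
  assert (Hlt : x*x + y*y < 1).
  { destruct (Req_dec y 0) as [Hy|Hy].
    - subst y. 
      assert (Htr : a + d < 2) by lra. assert (Htr2 : a + d > -2) by lra.
      assert (x < 1).
      { destruct (Rlt_or_le x 1) as [|Hx]; auto.
        assert (0 <= (x-1)*(x+1-(a+d))) by (apply Rmult_le_pos; lra). nra. }
      assert (-1 < x).
      { destruct (Rlt_or_le (-1) x) as [|Hx]; auto.
        assert (0 <= (-1-x)*(-x+1+(a+d))) by (apply Rmult_le_pos; lra). nra. }
      nra.
    - assert (Hx : 2*x - a - d = 0).
      { apply (Rmult_eq_reg_l y); [lra|]. lra. }
      nra. }
  unfold Cmod; simpl. apply Rlt_le_trans with (sqrt 1); [apply sqrt_lt_1_alt; simpl; split; nra | rewrite sqrt_1; lra].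
Qed.

Lemma eig_tri_real a b d x : is_eigenvalue2 a b 0 d (RtoC x) <-> (a - x)*(d-x) = 0.
Proof.
  unfold is_eigenvalue2; split; intros H.
  - pose proof (f_equal fst H) as H1. simpl in H1. lra.
  - unfold RtoC; apply injective_projections; simpl; lra.
Qed.

Lemma phi1_pos bY uY K beta h : 0 < bY -> 0 < uY -> 0 < K -> 0 < beta -> 0 < h ->
  0 < phi1 bY uY K beta h.
Proof.
  intros. unfold phi1.
  assert (exp (- (beta * K * uY / bY) * h) < 1).
  { rewrite <- exp_0. apply exp_increasing.
    assert (0 < beta * K * uY / bY) by (apply Rdiv_lt_0_compat; [apply Rmult_lt_0_compat; [apply Rmult_lt_0_compat|]|]; lra).
    nra. }
  apply Rdiv_lt_0_compat; [|apply Rmult_lt_0_compat; [apply Rmult_lt_0_compat|]]; nra.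
Qed.

Ltac sidec := repeat match goal with |- _ /\ _ => split | |- True => exact I end;
  try assumption; try (match goal with HD : _ <> 0 |- _ => let Hc := fresh in intro Hc; apply HD; rewrite <- Hc; ring end).

Definition Gx bX uX K beta e X Y := bX/K*X + bX/K*Y + uX + beta*Y + e/K*Y + e/K*(Y^2/X).
Definition Hx bY uY K X Y := bY/K*X + bY/K*Y + uY.

Lemma J11_gen bX bY uX uY K beta e h X0 Y0 p : X0 <> 0 -> K <> 0 ->
  p = phi1 bY uY K beta h ->
  1 + p * Gx bX uX K beta e X0 Y0 <> 0 ->
  J11 bX bY uX uY K beta e h X0 Y0 =
  ((1+p*bX)*(1+p*Gx bX uX K beta e X0 Y0) - (X0*(1+p*bX)+p*e*Y0)*(p*(bX/K - e/K*(Y0^2/X0^2))))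
   / (1+p*Gx bX uX K beta e X0 Y0)^2.
Proof.
  intros HX HK Hp HD. unfold Gx in *.
  unfold J11. apply is_derive_unique. unfold F1; cbv zeta; rewrite <- Hp. auto_derive.
  all: replace (Y0 * (Y0 * 1) * / X0) with (Y0^2/X0) by (unfold Rdiv; ring).
  - split; [exact HX| split; [intro Hc; apply HD; rewrite <- Hc; ring| exact I]].
  - field. split; [exact HX| split; [exact HK|]].
    intro Hc; apply HD; apply (Rmult_eq_reg_r (X0*K)); [|apply Rmult_integral_contrapositive_currified; auto].
    rewrite Rmult_0_l, <- Hc. field. auto.
Qed.

Lemma J12_gen bX bY uX uY K beta e h X0 Y0 p : X0 <> 0 -> K <> 0 ->
  p = phi1 bY uY K beta h ->
  1 + p * Gx bX uX K beta e X0 Y0 <> 0 ->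
  J12 bX bY uX uY K beta e h X0 Y0 =
  (p*e*(1+p*Gx bX uX K beta e X0 Y0) - (X0*(1+p*bX)+p*e*Y0)*(p*(bX/K + beta + e/K + e/K*(2*Y0/X0))))
   / (1+p*Gx bX uX K beta e X0 Y0)^2.
Proof.
  intros HX HK Hp HD. unfold Gx in *.
  unfold J12. apply is_derive_unique. unfold F1; cbv zeta; rewrite <- Hp. auto_derive.
  all: replace (Y0 * (Y0 * 1) * / X0) with (Y0^2/X0) by (unfold Rdiv; ring).
  - intro Hc; apply HD; rewrite <- Hc; ring.
  - field. split; [exact HX| split; [exact HK|]].
    intro Hc; apply HD; apply (Rmult_eq_reg_r (X0*K)); [|apply Rmult_integral_contrapositive_currified; auto].
    rewrite Rmult_0_l, <- Hc. field. auto.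
Qed.

Lemma J21_gen bX bY uX uY K beta e h X0 Y0 : K <> 0 ->
  1 + h * Hx bY uY K X0 Y0 <> 0 ->
  J21 bX bY uX uY K beta e h X0 Y0 =
  Y0*(h*beta*(1 + h * Hx bY uY K X0 Y0) - (1+h*(bY+beta*X0))*(h*(bY/K)))/(1 + h * Hx bY uY K X0 Y0)^2.
Proof.
  intros HK HD. unfold Hx in *.
  unfold J21. apply is_derive_unique. unfold F2, phi2. auto_derive.
  - sidec.
  - field. split; [exact HK|].
    intro Hc; apply HD; apply (Rmult_eq_reg_r K); [|auto].
    rewrite Rmult_0_l, <- Hc. field. auto.
Qed.

Lemma J22_gen bX bY uX uY K beta e h X0 Y0 : K <> 0 ->
  1 + h * Hx bY uY K X0 Y0 <> 0 ->
  J22 bX bY uX uY K beta e h X0 Y0 =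
  ((1+h*(bY+beta*X0))*(1 + h * Hx bY uY K X0 Y0) - Y0*(1+h*(bY+beta*X0))*(h*(bY/K)))/(1 + h * Hx bY uY K X0 Y0)^2.
Proof.
  intros HK HD. unfold Hx in *.
  unfold J22. apply is_derive_unique. unfold F2, phi2. auto_derive.
  - sidec.
  - field. split; [exact HK|].
    intro Hc; apply HD; apply (Rmult_eq_reg_r K); [|auto].
    rewrite Rmult_0_l, <- Hc. field. auto.
Qed.

Lemma J21_Y0 bX bY uX uY K beta e h X0 : J21 bX bY uX uY K beta e h X0 0 = 0.
Proof.
  unfold J21. rewrite (Derive_ext _ (fun _ => 0)). apply Derive_const.
  intro t. unfold F2. unfold Rdiv; ring.
Qed.

Lemma J11_Y0 bX bY uX uY K beta e h X0 p : K <> 0 ->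
  p = phi1 bY uY K beta h ->
  1 + p * (bX/K*X0 + uX) <> 0 ->
  J11 bX bY uX uY K beta e h X0 0 =
  ((1+p*bX)*(1+p*(bX/K*X0 + uX)) - X0*(1+p*bX)*(p*(bX/K)))/(1+p*(bX/K*X0 + uX))^2.
Proof.
  intros HK Hp HD.
  unfold J11. rewrite (Derive_ext _ (fun x => x*(1+p*bX)/(1+p*(bX/K*x + uX)))).
  - apply is_derive_unique. auto_derive.
    + sidec.
    + field. split; [exact HK|].
      intro Hc; apply HD; apply (Rmult_eq_reg_r K); [|auto].
      rewrite Rmult_0_l, <- Hc. field. auto.
  - intro t. unfold F1; cbv zeta; rewrite <- Hp. replace (0^2/t) with 0 by (unfold Rdiv; ring).
    unfold Rdiv; f_equal; [ring| f_equal; ring].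
Qed.

Lemma bilin_pos f00 f10 f01 f11 u v : 0 < f00 -> 0 < f10 -> 0 < f01 -> 0 < f11 ->
  0 < u < 1 -> 0 < v < 1 ->
  0 < (1-u)*(1-v)*f00 + u*(1-v)*f10 + (1-u)*v*f01 + u*v*f11.
Proof.
  intros. assert (0 < (1-u)*(1-v)) by nra. assert (0 < u*(1-v)) by nra.
  assert (0 < (1-u)*v) by nra. assert (0 < u*v) by nra. nra.
Qed.

Lemma core_ineq bX bY K beta e X Y :
  0 < bX -> 0 < bY -> 0 < K -> 0 < beta -> 0 < e -> 0 < X -> 0 < Y -> X + Y < K ->
  bY > beta * K -> bX >= bY + e ->
  let G0 := bX + e*Y/X in let a0 := bY + beta*X in
  let al := e*Y/X*(1-Y/K) + bX*X/K in
  let b1 := X*(bX/K+beta+e/K) + 2*e*Y/K - e in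
  let ga := Y*(bY/K - beta) in let de := Y*bY/K in
  0 < al < G0 /\ 0 < de < a0 /\ 0 < ga /\
  0 < al*de - b1*ga /\ al*de - b1*ga < al*a0 + de*G0 /\
  0 < (2*G0 - al)*(2*a0 - de) - b1*ga.
Proof.
  intros HbX HbY HK Hb He HX HY HN H1 H2 G0 a0 al b1 ga de.
  set (x := X/K). set (y := Y/K).
  assert (Hx : 0 < x) by (unfold x; apply Rdiv_lt_0_compat; lra).
  assert (Hy : 0 < y) by (unfold y; apply Rdiv_lt_0_compat; lra).
  assert (Hxy : x + y < 1).
  { unfold x, y. apply (Rmult_lt_reg_r K); [lra|]. field_simplify; lra. }
  set (r := Y/X).
  assert (Hr : 0 < r) by (unfold r; apply Rdiv_lt_0_compat; lra).
  assert (Hrx : r * x = y) by (unfold r, x, y; field; lra).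
  assert (EG : G0 = bX + e*r) by (unfold G0, r; field; lra).
  assert (Ea0 : a0 = bY + beta*K*x) by (unfold a0, x; field; lra).
  assert (Eal : al = e*r*(1-y) + bX*x) by (unfold al, r, x, y; field; lra).
  assert (Eb1 : b1 = x*(bX+beta*K+e) + 2*e*y - e) by (unfold b1, x, y; field; lra).
  assert (Ega : ga = y*(bY - beta*K)) by (unfold ga, y; field; lra).
  assert (Ede : de = y*bY) by (unfold de, y; field; lra).
  clearbody G0 a0 al b1 ga de. subst G0 a0 al b1 ga de.
  set (bK := beta*K) in *.
  assert (HbK : 0 < bK) by (unfold bK; nra). clearbody bK.
  assert (Her : 0 < e*r) by nra.
  assert (Hery : 0 < e*r*y) by nra.
  assert (Hal0 : 0 < e*r*(1-y) + bX*x) by nra.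
  assert (HalG : e*r*(1-y) + bX*x < bX + e*r) by nra.
  assert (Hde : 0 < y*bY < bY + bK*x) by nra.
  assert (Hga : 0 < y*(bY - bK)) by nra.
  assert (EM : (e*r*(1-y) + bX*x)*(y*bY) - (x*(bX+bK+e) + 2*e*y - e)*(y*(bY-bK))
     = y*(e*(1-x-y)*(bY*(1+r) - bK) + bK*x*(bX-bY) + bK*bK*x + bK*e*y)).
  { rewrite <- Hrx. ring. }
  assert (HM : 0 < (e*r*(1-y) + bX*x)*(y*bY) - (x*(bX+bK+e) + 2*e*y - e)*(y*(bY-bK))).
  { rewrite EM. apply Rmult_lt_0_compat; [lra|].
    assert (0 < e*(1-x-y)) by nra. assert (0 < bY*(1+r) - bK) by nra.
    assert (0 < e*(1-x-y)*(bY*(1+r) - bK)) by nra.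
    assert (0 < bK*x) by nra.
    assert (0 <= bK*x*(bX-bY)) by (apply Rmult_le_pos; lra). assert (0 < bK*bK*x) by nra. assert (0 < bK*e*y) by nra.
    lra. }
  split; [lra|]. split; [lra|]. split; [lra|]. split; [exact HM|]. split.
  - assert (0 < (e*r*(1-y) + bX*x)*(bY + bK*x - y*bY)) by nra.
    assert (0 < y*bY*(bX+e*r) + (x*(bX+bK+e) + 2*e*y - e)*(y*(bY-bK))).
    { assert (x*(bX+bK+e) + 2*e*y - e >= -e) by nra.
      assert ((x*(bX+bK+e) + 2*e*y - e)*(y*(bY-bK)) >= -e*(y*(bY-bK))) by nra.
      assert (0 < y*bY) by nra. assert (y*bY*(bX-e) > 0) by (apply Rmult_lt_0_compat; lra).
      assert (e*y*bK > 0) by nra.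
      assert (y*bY*bX > e*(y*(bY-bK))) by nra.
      assert (0 <= y*bY*(e*r)) by nra. lra. }
    nra.
  - set (b1 := x*(bX+bK+e) + 2*e*y - e).
    assert (Hprod : (2*(bX+e*r) - (e*r*(1-y) + bX*x))*(2*(bY+bK*x) - y*bY) > (bX+e*r)*(bY+bK*x)).
    { assert (2*(bX+e*r) - (e*r*(1-y) + bX*x) > bX+e*r) by lra.
      assert (2*(bY+bK*x) - y*bY > bY+bK*x) by lra. 
      assert (0 < bX + e*r) by nra. assert (0 < bY + bK*x) by nra. nra. }
    assert (b1*(y*(bY-bK)) < (bX+e*r)*(bY+bK*x)).
    { destruct (Rle_or_lt b1 0) as [Hb1|Hb1].
      - assert (b1*(y*(bY-bK)) <= 0) by nra. assert (0 < (bX+e*r)*(bY+bK*x)) by nra. lra.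
      - assert (Hb1u : b1 <= bX + bK + e*y) by (unfold b1; nra).
        assert (Hq : 0 < b1*(bY-bK)) by (apply Rmult_lt_0_compat; lra).
        assert (b1*(y*(bY-bK)) < b1*(bY-bK)).
        { assert (0 < b1*(bY-bK)*(1-y)) by (apply Rmult_lt_0_compat; lra). nra. }
        assert (b1*(bY-bK) <= (bX + bK + e*y)*(bY-bK)) by (apply Rmult_le_compat_r; lra).
        assert ((bX + bK + e*y)*(bY-bK) <= bX*bY + e*y*bY).
        { assert (0 <= bK*(bX - bY)) by (apply Rmult_le_pos; lra).
          assert (0 <= bK*bK) by nra. assert (0 <= e*y*bK) by nra. nra. }
        assert (e*y*bY <= e*r*bY).
        { assert (y <= r). { rewrite <- Hrx. assert (0 < r*(1-x)) by (apply Rmult_lt_0_compat; lra). nra. }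
          assert (0 <= e*bY) by nra. nra. }
        assert (0 < bK*x) by nra.
        assert (0 <= bX*(bK*x)) by nra. assert (0 <= (e*r)*(bK*x)) by nra. nra. }
    lra.
Qed.

Lemma jury_st_conds al b1 ga de G0 a0 s t :
  0 < al < G0 -> 0 < de < a0 -> 0 < ga ->
  0 < al*de - b1*ga -> al*de - b1*ga < al*a0 + de*G0 ->
  0 < (2*G0 - al)*(2*a0 - de) - b1*ga ->
  0 < s*G0 < 1 -> 0 < t*a0 < 1 ->
  let a := 1 - s*al in let b := -(s*b1) in let c := -(t*ga) in let d := 1 - t*de in
  1 - (a+d) + (a*d - b*c) > 0 /\ 1 + (a+d) + (a*d-b*c) > 0 /\ a*d - b*c < 1.
Proof.
  intros Hal Hde Hga HM HM2 HF3 Hs Ht a b c d.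
  assert (HG : 0 < G0) by lra. assert (Ha0 : 0 < a0) by lra.
  assert (Hs0 : 0 < s). { destruct (Rle_or_lt s 0); auto. nra. }
  assert (Ht0 : 0 < t). { destruct (Rle_or_lt t 0); auto. nra. }
  unfold a, b, c, d. split; [|split].
  - replace (1 - (1 - s * al + (1 - t * de)) + ((1 - s * al) * (1 - t * de) - - (s * b1) * - (t * ga)))
      with (s*t*(al*de - b1*ga)) by ring.
    assert (0 < s*t) by nra. nra.
  - set (u := s*G0) in *. set (v := t*a0) in *.
    assert (E : 1 + (1 - s * al + (1 - t * de)) + ((1 - s * al) * (1 - t * de) - - (s * b1) * - (t * ga))
      = ((1-u)*(1-v)*4 + u*(1-v)*(2*(2*G0-al)/G0) + (1-u)*v*(2*(2*a0-de)/a0)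
         + u*v*(((2*G0 - al)*(2*a0 - de) - b1*ga)/(G0*a0)))).
    { unfold u, v. field. lra. }
    rewrite E. apply bilin_pos; auto; try lra.
    + apply Rdiv_lt_0_compat; lra.
    + apply Rdiv_lt_0_compat; lra.
    + apply Rdiv_lt_0_compat; nra.
  - assert (Hst : 0 < s*t) by nra.
    assert (s*t*(al*de - b1*ga) < s*t*(al*a0 + de*G0)) by nra.
    assert (0 < s*al*(1 - t*a0)) by (apply Rmult_lt_0_compat; nra).
    assert (0 < t*de*(1 - s*G0)) by (apply Rmult_lt_0_compat; nra).
    nra.
Qed.

Ltac pos := repeat (match goal with
 | |- 0 < _ + _ => apply Rplus_lt_0_compat
 | |- 0 < _ * _ => apply Rmult_lt_0_compat
 | |- 0 < _ / _ => apply Rdiv_lt_0_compat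
 end); try lra.
Ltac nz := repeat split; try (apply Rgt_not_eq; unfold Rgt; pos).

Lemma tri_LAS a b d z : -1 < a < 1 -> -1 < d < 1 -> is_eigenvalue2 a b 0 d z -> Cmod z < 1.
Proof.
  intros Ha Hd. apply jury; rewrite Rmult_0_r, Rminus_0_r; nra.
Qed.

Lemma frac_01 n m : 0 < n < m -> -1 < n/m < 1.
Proof.
  intros H. split.
  - assert (0 < n/m) by (apply Rdiv_lt_0_compat; lra). lra.
  - apply (Rmult_lt_reg_r m); [lra|]. field_simplify; lra.
Qed.

Lemma frac_gt1 n m : 0 < m < n -> 1 < n/m.
Proof.
  intros H. apply (Rmult_lt_reg_r m); [lra|]. field_simplify; lra.
Qed.

Lemma st_bound p G : 0 < p -> 0 < G -> 0 < p/(1+p*G)*G < 1.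
Proof.
  intros Hp HG. assert (0 < p*G) by nra. split.
  - apply Rmult_lt_0_compat; [apply Rdiv_lt_0_compat|]; lra.
  - replace (p/(1+p*G)*G) with ((p*G)/(1+p*G)) by (field; lra).
    apply frac_01; lra.
Qed.

Theorem theorem4 (bX bY uX uY K beta e h : R) :
  0 < bX -> 0 < bY -> 0 < uX -> 0 < uY -> 0 < K -> 0 < beta -> 0 < e ->
  uY > uX -> bX >= bY + e -> 0 < h ->
  (* (i) *)
  ((bX < uX -> bY < uY -> LAS bX bY uX uY K beta e h 0 0) /\
  (* (ii) *)
   (bX > uX ->
      (Rnum0 bX bY uX uY K beta < 1 -> LAS bX bY uX uY K beta e h (Xbar bX uX K) 0) /\
      (Rnum0 bX bY uX uY K beta > 1 -> unstable bX bY uX uY K beta e h (Xbar bX uX K) 0)) /\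
  (* (iii) *)
   (bX > uX -> bY > uY -> bY > beta * K ->
      K / Xstar bX bY uX uY e K beta > (bY - beta * K) / (bY - uY) ->
      LAS bX bY uX uY K beta e h (Xstar bX bY uX uY e K beta) (Ystar bX bY uX uY e K beta))).
Proof.
  intros HbX HbY HuX HuY HK Hb He HuYX HbXe Hh.
  assert (Hp0 : 0 < phi1 bY uY K beta h) by (apply phi1_pos; auto).
  set (p := phi1 bY uY K beta h) in *.
  assert (HKn : K <> 0) by lra.
  split; [|split].
  -
    intros H1 H2 z Hz. unfold jac_eigenvalue in Hz.
    rewrite J21_Y0 in Hz.
    assert (E11 : J11 bX bY uX uY K beta e h 0 0 = (1+p*bX)/(1+p*uX)).
    { rewrite (J11_Y0 _ _ _ _ _ _ _ _ _ p HKn eq_refl).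
      - field. nz.
      - replace (bX / K * 0 + uX) with uX by (field; lra). nz. }
    assert (E22 : J22 bX bY uX uY K beta e h 0 0 = (1+h*bY)/(1+h*uY)).
    { rewrite J22_gen; unfold Hx.
      - field. nz.
      - exact HKn.
      - unfold Hx. replace (bY / K * 0 + bY / K * 0 + uY) with uY by (field; lra). nz. }
    rewrite E11, E22 in Hz.
    refine (tri_LAS _ _ _ z _ _ Hz); apply frac_01; split; nra.
  - intros H1.
    assert (HXb : 0 < Xbar bX uX K).
    { unfold Xbar. apply Rmult_lt_0_compat; [lra|].
      assert (uX/bX < 1) by (apply (Rmult_lt_reg_r bX); [lra|]; field_simplify; lra). lra. }
    assert (ED : bX / K * Xbar bX uX K + uX = bX) by (unfold Xbar; field; lra).
    assert (E11 : J11 bX bY uX uY K beta e h (Xbar bX uX K) 0 = (1+p*uX)/(1+p*bX)).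
    { rewrite (J11_Y0 _ _ _ _ _ _ _ _ _ p HKn eq_refl).
      - rewrite ED. replace (Xbar bX uX K) with (K*(bX-uX)/bX) by (unfold Xbar; field; lra).
        field. nz.
      - rewrite ED. nz. }
    set (n2 := 1 + h*(bY + beta*Xbar bX uX K)).
    set (m2 := 1 + h*(bY/K*Xbar bX uX K + uY)).
    assert (Hm2 : 0 < m2).
    { unfold m2. assert (0 < bY/K*Xbar bX uX K).
      { apply Rmult_lt_0_compat; [apply Rdiv_lt_0_compat|]; lra. } pos. }
    assert (Hn2 : 0 < n2) by (unfold n2; pos).
    assert (E22 : J22 bX bY uX uY K beta e h (Xbar bX uX K) 0 = n2/m2).
    { rewrite J22_gen; unfold Hx.
      - unfold n2, m2. replace (bY / K * Xbar bX uX K + bY / K * 0 + uY) with (bY / K * Xbar bX uX K + uY) by ring.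
        field. nz.
      - exact HKn.
      - unfold Hx. replace (bY / K * Xbar bX uX K + bY / K * 0 + uY) with (bY / K * Xbar bX uX K + uY) by ring.
        fold m2. apply Rgt_not_eq; lra. }
    assert (Eid : n2 - m2 = h*uY*(Rnum0 bX bY uX uY K beta - 1)).
    { unfold n2, m2, Rnum0, V0, H0, Xbar. field. lra. }
    assert (E11b : -1 < (1+p*uX)/(1+p*bX) < 1) by (apply frac_01; split; nra).
    split.
    + intros HR z Hz. unfold jac_eigenvalue in Hz.
      rewrite J21_Y0, E11, E22 in Hz.
      refine (tri_LAS _ _ _ z E11b _ Hz).
      apply frac_01. split; [lra|].
      assert (h*uY*(Rnum0 bX bY uX uY K beta - 1) < 0).
      { assert (0 < h*uY) by nra. nra. }
      lra.
    + intros HR. exists (RtoC (n2/m2)). split.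
      * unfold jac_eigenvalue. rewrite J21_Y0, E11, E22. apply eig_tri_real. ring.
      * rewrite Cmod_R. assert (1 < n2/m2).
        { apply frac_gt1. split; [lra|].
          assert (h*uY*(Rnum0 bX bY uX uY K beta - 1) > 0).
          { assert (0 < h*uY) by nra. nra. }
          lra. }
        rewrite Rabs_right; lra.
  - intros H1 H2 H3 H4.
    assert (HA : 0 < coefA bX bY e K beta).
    { unfold coefA. apply Rmult_lt_0_compat.
      - apply Rdiv_lt_0_compat; [nra|]. simpl; nra.
      - assert (0 <= bY*(bX-bY-e)) by (apply Rmult_le_pos; lra).
        assert (0 < beta*K*(bY+e)) by pos. lra. }
    assert (HC : coefC bY uY e K < 0).
    { unfold coefC. assert (0 < e * K ^ 2 * (bY - uY) * uY / bY ^ 2).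
      { apply Rdiv_lt_0_compat; [|simpl; nra].
        repeat apply Rmult_lt_0_compat; try lra; simpl; nra. }
      lra. }
    set (A := coefA bX bY e K beta) in *.
    set (B := coefB bX bY uX uY e K beta) in *.
    set (C0 := coefC bY uY e K) in *.
    assert (HD : 0 <= B^2 - 4*A*C0) by (assert (0 < A * (- C0)) by nra; simpl; nra).
    set (X := Xstar bX bY uX uY e K beta) in *.
    set (Y := Ystar bX bY uX uY e K beta) in *.
    assert (HYdef : Y = (beta * K - bY) * X / bY + K * (bY - uY) / bY) by reflexivity.
    assert (HXd : X*(2*A) + B = sqrt (B^2 - 4*A*C0)).
    { unfold X, Xstar. fold A B C0. field. lra. }
    assert (HQ : A*X^2 + B*X + C0 = 0).
    { assert (E : (X*(2*A) + B)^2 = B^2 - 4*A*C0).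
      { rewrite HXd. apply pow2_sqrt. exact HD. }
      assert (E2 : 4*A*(A*X^2 + B*X + C0) = 0) by (simpl in *; nra).
      assert (4*A <> 0) by lra.
      apply (Rmult_eq_reg_l (4*A)); [|lra]. rewrite Rmult_0_r. exact E2. }
    assert (Hq : 0 < (bY - beta*K)/(bY-uY)) by (apply Rdiv_lt_0_compat; lra).
    assert (HX : 0 < X).
    { destruct (Rlt_or_le 0 X) as [|HX0]; auto.
      destruct (Req_dec X 0) as [HX1|HX1].
      - rewrite HX1 in H4. unfold Rdiv in H4. rewrite Rinv_0, Rmult_0_r in H4. lra.
      - assert (K / X < 0).
        { replace (K/X) with (-(K/(-X))) by (field; auto).
          assert (0 < K/(-X)) by (apply Rdiv_lt_0_compat; lra). lra. }
        lra. }
    assert (HKX : (bY - beta*K) * X < K*(bY-uY)).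
    { assert (E : K / X * (X*(bY-uY)) = K*(bY-uY)) by (field; lra).
      assert (E' : (bY - beta * K) / (bY - uY) * (X*(bY-uY)) = (bY - beta*K)*X) by (field; lra).
      assert (0 < X*(bY-uY)) by pos.
      rewrite <- E, <- E'. apply Rmult_lt_compat_r; lra. }
    assert (HY : 0 < Y).
    { rewrite HYdef. replace ((beta * K - bY) * X / bY + K * (bY - uY) / bY)
        with ((K*(bY-uY) - (bY - beta*K) * X)/bY) by (field; lra).
      apply Rdiv_lt_0_compat; lra. }
    assert (HP : bX/K*X^2 + bX/K*X*Y + uX*X + beta*X*Y + e/K*X*Y + e/K*Y^2 - bX*X - e*Y = 0).
    { assert (E : K*(bX/K*X^2 + bX/K*X*Y + uX*X + beta*X*Y + e/K*X*Y + e/K*Y^2 - bX*X - e*Y)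
                  = A*X^2 + B*X + C0).
      { rewrite HYdef. unfold A, B, C0, coefA, coefB, coefC. field. lra. }
      apply (Rmult_eq_reg_l K); [|lra]. rewrite E, HQ. ring. }
    assert (HuXe : uX = (bX + e*Y/X)*(1-(X+Y)/K) - beta*Y).
    { apply (Rmult_eq_reg_r (K*X)); [|nz].
      assert (E : ((bX + e*Y/X)*(1-(X+Y)/K) - beta*Y)*(K*X) = uX*(K*X)
           - K*(bX/K*X^2 + bX/K*X*Y + uX*X + beta*X*Y + e/K*X*Y + e/K*Y^2 - bX*X - e*Y))
        by (field; lra).
      rewrite E, HP. ring. }
    assert (HuYe : uY = bY*(1-(X+Y)/K) + beta*X).
    { rewrite HYdef at 1. field. lra. }
    assert (HN : X + Y < K).
    { destruct (Rlt_or_le (X+Y) K) as [|HN]; auto.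
      assert (0 <= (X+Y)/K - 1).
      { apply (Rmult_le_reg_r K); [lra|]. field_simplify; lra. }
      assert (0 < bX + e*Y/X) by pos.
      assert (0 <= (bX + e*Y/X)*((X+Y)/K - 1)) by (apply Rmult_le_pos; lra).
      assert (0 < beta*Y) by pos. nra. }
    clearbody X Y.
    intros z Hz. unfold jac_eigenvalue in Hz.
    assert (EG : Gx bX uX K beta e X Y = bX + e*Y/X).
    { unfold Gx. rewrite HuXe. field. lra. }
    assert (EH : Hx bY uY K X Y = bY + beta*X).
    { unfold Hx. rewrite HuYe. field. lra. }
    set (G0 := bX + e*Y/X) in *. set (a0 := bY + beta*X) in *.
    assert (HG0 : 0 < G0) by (unfold G0; pos).
    assert (Ha0 : 0 < a0) by (unfold a0; pos).
    set (s := p/(1+p*G0)). set (t := h/(1+h*a0)).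
    assert (HXn : X <> 0) by lra.
    assert (HDp : 1 + p * Gx bX uX K beta e X Y <> 0) by (rewrite EG; nz).
    assert (HDh : 1 + h * Hx bY uY K X Y <> 0) by (rewrite EH; nz).
    assert (E11 : J11 bX bY uX uY K beta e h X Y = 1 - s*(e*Y/X*(1-Y/K) + bX*X/K)).
    { rewrite (J11_gen _ _ _ _ _ _ _ _ _ _ p HXn HKn eq_refl HDp). rewrite EG.
      unfold s, G0. field. nz. }
    assert (E12 : J12 bX bY uX uY K beta e h X Y = -(s*(X*(bX/K+beta+e/K) + 2*e*Y/K - e))).
    { rewrite (J12_gen _ _ _ _ _ _ _ _ _ _ p HXn HKn eq_refl HDp). rewrite EG.
      unfold s, G0. field. nz. }
    assert (E21 : J21 bX bY uX uY K beta e h X Y = -(t*(Y*(bY/K - beta)))).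
    { rewrite (J21_gen _ _ _ _ _ _ _ _ _ _ HKn HDh). rewrite EH.
      unfold t, a0. field. nz. }
    assert (E22 : J22 bX bY uX uY K beta e h X Y = 1 - t*(Y*bY/K)).
    { rewrite (J22_gen _ _ _ _ _ _ _ _ _ _ HKn HDh). rewrite EH.
      unfold t, a0. field. nz. }
    rewrite E11, E12, E21, E22 in Hz.
    destruct (core_ineq bX bY K beta e X Y) as (C1 & C2 & C3 & C4 & C5 & C6); auto; try lra.
    fold G0 a0 in C1, C2, C3, C4, C5, C6.
    destruct (jury_st_conds _ _ _ _ G0 a0 s t C1 C2 C3 C4 C5 C6) as (J1 & J2 & J3).
    + apply st_bound; auto.
    + apply st_bound; auto.
    + exact (jury _ _ _ _ z J1 J2 J3 Hz).
Qed.
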